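(* Let $\epsilon>0$ and let $u^1,u^2$ be smooth functions on $[0,1]^2$; denote also by $u^1,u^2$ their restrictions to the grid $(x_i,y_j)=(i\Delta x,j\Delta y)$, $i=0,\dots,N-1$, $j=0,\dots,M-1$, $(N-1)\Delta x=(M-1)\Delta y=1$. Let $D_x=P_x^{-1}Q_x$, $D_y=P_y^{-1}Q_y$ be summation-by-parts operators with $P_x=\Delta x\,\mathrm{diag}(p^x_0,\dots,p^x_{N-1})$, $P_y=\Delta y\,\mathrm{diag}(p^y_0,\dots,p^y_{M-1})$, positive entries, $Q_x+Q_x^T=R_N-L_N$, $Q_y+Q_y^T=R_M-L_M$, and $p:=p^x_0=p^x_{N-1}=p^y_0=p^y_{M-1}$; assume moreover that these operators satisfy, for every smooth $\bar u$ with grid restriction $u$ and every grid function $w$, $\|D_x(u\circ w)-u\circ D_xw\|_{P_x}\le C_0\|\partial_x\bar u\|_{L^\infty}\|w\|_{P_x}$ (and analogously in $y$) with $C_0$ independent of the grid. Let $\mathbf V(t)=(V^1(t),V^2(t))$ solve the semi-discrete scheme $$ \mathbf V_t+u^1\circ\mathfrak{d}_x\mathbf V+u^2\circ\mathfrak{d}_y\mathbf V-C\mathbf V+\epsilon\,\mathfrak{curl}^2(\mathbf V)=\mathcal B\mathbf V,\qquad t>0, $$ (i.e. the scheme with homogeneous Dirichlet data $\mathbf g=0$), where $C=\begin{pmatrix}-\mathfrak{d}_yu^2 & \mathfrak{d}_yu^1\\ \mathfrak{d}_xu^2 & -\mathfrak{d}_xu^1\end{pmatrix}$ (entries acting by componentwise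 multiplication) and $$\mathcal B=(P_x^{-1}\otimes I_M)(\Sigma_{\mathcal L}\mathcal L+\Sigma_{\mathcal R}\mathcal R)+(I_N\otimes P_y^{-1})(\Sigma_{\mathcal D}\mathcal D+\Sigma_{\mathcal U}\mathcal U),$$ with diagonal penalty matrices $\Sigma_{\mathcal K}=\Sigma'_{\mathcal K}+\epsilon\Sigma''_{\mathcal K}$ ($\mathcal K\in\{\mathcal L,\mathcal R,\mathcal D,\mathcal U\}$), whose diagonal entries are indexed like grid functions, $(\sigma_{\mathcal K})_{i,j}$. Suppose the penalty parameters satisfy $$(\sigma'_{\mathcal R})_{N-1,j}\le \tfrac{u^{1,-}(1,y_j)}{2},\quad (\sigma'_{\mathcal L})_{0,j}\le-\tfrac{u^{1,+}(0,y_j)}{2},\quad (\sigma'_{\mathcal U})_{i,M-1}\le\tfrac{u^{2,-}(x_i,1)}{2},\quad (\sigma'_{\mathcal D})_{i,0}\le-\tfrac{u^{2,+}(x_i,0)}{2},$$ $$\sigma''_{\mathcal R}\le-\tfrac{1}{2p\Delta x},\quad \sigma''_{\mathcal L}\le-\tfrac{1}{2p\Delta x},\quad \sigma''_{\mathcal U}\le-\tfrac{1}{2p\Delta y},\quad \sigma''_{\mathcal D}\le-\tfrac{1}{2p\Delta y},$$ and all other entries are $0$. Then $$\|\mathbf V(t)\|_{\mathbf P}^2\le e^{ct}\|\mathbf V(0)\|_{\mathbf P}^2,$$ where $c$ is a constant depending on $u^1,u^2$ and their derivative approximations but not on $N$ or $M$.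
   Context: $R_n=\mathrm{diag}(0,\dots,0,1)$, $L_n=\mathrm{diag}(1,0,\dots,0)$ ($n\times n$), $I_n$ identity, $\otimes$ Kronecker product. $\mathfrak{d}_x=D_x\otimes I_M$, $\mathfrak{d}_y=I_N\otimes D_y$, $\mathbf P=P_x\otimes P_y$, $\mathcal R=R_N\otimes I_M$, $\mathcal L=L_N\otimes I_M$, $\mathcal U=I_N\otimes R_M$, $\mathcal D=I_N\otimes L_M$. Grid functions are ordered as $(w_{0,0},w_{0,1},\dots,w_{0,M-1},w_{1,0},\dots,w_{N-1,M-1})^T$; $(u\circ w)_k=u_kw_k$; $\|w\|_{P_x}=(w^TP_xw)^{1/2}$. $(v,w)_{\mathbf P}=v^T\mathbf Pw$, and for vector grid functions $(\mathbf V,\mathbf W)_{\mathbf P}=(V^1,W^1)_{\mathbf P}+(V^2,W^2)_{\mathbf P}$, $\|\mathbf V\|_{\mathbf P}=(\mathbf V,\mathbf V)_{\mathbf P}^{1/2}$; operators and $\mathcal B$ act on $\mathbf V$ componentwise. $\mathfrak{curl}^2(\mathbf V)=(-\mathfrak{d}_{yy}V^1+\mathfrak{d}_{xy}V^2,\ \mathfrak{d}_{xy}V^1-\mathfrak{d}_{xx}V^2)$ with $\mathfrak{d}_{xy}=\mathfrak{d}_x\mathfrak{d}_y$, etc. $u^{l,+}=\max(u^l,0)$, $u^{l,-}=\min(u^l,0)$. The $\Sigma''$ conditions are stated for scalar (constant) values $\sigma''_{\mathcal K}$ of the relevant boundary entries. *)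

(* Defs.v *)
From HB Require Import structures.
From mathcomp Require Import all_boot all_order all_algebra.
From mathcomp Require Import all_classical all_reals all_analysis.
Set Implicit Arguments. Unset Strict Implicit. Unset Printing Implicit Defensive.
Import Order.TTheory GRing.Theory Num.Theory.
Import numFieldNormedType.Exports.
Local Open Scope ring_scope.
Local Open Scope classical_set_scope.

Definition smooth1 {R : realType} (f : R -> R) : Prop :=
  forall (k : nat) (x : R), derivable (derive1n k f) x 1.

Definition pd {R : realType} (b : bool) (f : R -> R -> R) : R -> R -> R :=
  if b then (fun x y => derive1 (fun x' => f x' y) x)
  else (fun x y => derive1 (f x) y).

Definition pds {R : realType} (s : seq bool) (f : R -> R -> R) : R -> R -> R :=
  foldr (@pd R) f s.

Definition smooth2 {R : realType} (f : R -> R -> R) : Prop :=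
  forall s : seq bool,
    (forall x y : R, derivable (fun x' => pds s f x' y) x 1 /\
                     derivable (pds s f x) y 1) /\
    continuous (fun q : R * R => pds s f q.1 q.2).

Definition supnorm01 {R : realType} (g : R -> R) : R :=
  sup [set `|g x| | x in `[0%R, 1%R]].

Definition gstep {R : realType} (n : nat) : R := 1 / (n.-1)%:R.
Definition gpt {R : realType} (n : nat) (i : 'I_n) : R := (i : nat)%:R * gstep n.

Definition Lmx {R : realType} (n : nat) : 'M[R]_n :=
  \matrix_(i, j) ((i == j) && ((i : nat) == 0%N))%:R.
Definition Rmx {R : realType} (n : nat) : 'M[R]_n :=
  \matrix_(i, j) ((i == j) && ((i : nat) == n.-1))%:R.

Definition Pmat {R : realType} (n : nat) (p : 'I_n -> R) : 'M[R]_n :=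
  gstep n *: diag_mx (\row_i p i).

Definition Dmat {R : realType} (n : nat) (p : 'I_n -> R) (Q : 'M[R]_n) : 'M[R]_n :=
  invmx (Pmat p) *m Q.

Definition SBP {R : realType} (n : nat) (p : 'I_n -> R) (Q : 'M[R]_n) : Prop :=
  (forall i, 0 < p i) /\ Q + Q^T = Rmx n - Lmx n.

Definition hmul {R : realType} (m n : nat) (A B : 'M[R]_(m, n)) : 'M[R]_(m, n) :=
  \matrix_(i, j) (A i j * B i j).

Definition normP {R : realType} (n : nat) (P : 'M[R]_n) (w : 'cV[R]_n) : R :=
  Num.sqrt ((w^T *m P *m w) 0 0).

Definition grid1 {R : realType} (n : nat) (f : R -> R) : 'cV[R]_n :=
  \col_i f (gpt i).

Definition commutator_bound {R : realType} (C0 : R) (n : nat) (P D : 'M[R]_n) : Prop :=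
  forall (ub : R -> R) (w : 'cV[R]_n), smooth1 ub ->
    normP P (D *m hmul (grid1 n ub) w - hmul (grid1 n ub) (D *m w))
      <= C0 * supnorm01 (derive1 ub) * normP P w.

(* A grid function w = (w_{0,0}, w_{0,1}, ..., w_{N-1,M-1})^T is stored as *)
(* the N x M matrix W with W i j = w_{i,j} (so w = vec of the rows of W).  *)
(* Under this identification  (A (x) B) w  corresponds to  A W B^T, hence *)
(*   d_x = D_x (x) I_M  :  W |-> D_x W,                                    *)
(*   d_y = I_N (x) D_y  :  W |-> W D_y^T,                                  *)
(*   L = L_N (x) I_M : W |-> L_N W,   R = R_N (x) I_M : W |-> R_N W,        *)
(*   D = I_N (x) L_M : W |-> W L_M^T, U = I_N (x) R_M : W |-> W R_M^T,      *)
(*   a diagonal matrix Sigma indexed like grid functions acts as Hadamard  *)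
(*   multiplication by its matrix of diagonal entries.                     *)

Definition grid2 {R : realType} (N M : nat) (f : R -> R -> R) : 'M[R]_(N, M) :=
  \matrix_(i, j) f (gpt i) (gpt j).

Definition dX {R : realType} (N M : nat) (Dx : 'M[R]_N) (W : 'M[R]_(N, M)) : 'M[R]_(N, M) :=
  Dx *m W.
Definition dY {R : realType} (N M : nat) (Dy : 'M[R]_M) (W : 'M[R]_(N, M)) : 'M[R]_(N, M) :=
  W *m Dy^T.

(* (V, W)_P = v^T (Px (x) Py) w, written entrywise *)
Definition ipP {R : realType} (N M : nat) (Px : 'M[R]_N) (Py : 'M[R]_M)
    (V W : 'M[R]_(N, M)) : R :=
  \sum_(i < N) \sum_(i' < N) \sum_(j < M) \sum_(j' < M)
     V i j * (Px i i' * Py j j') * W i' j'.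

Definition energy {R : realType} (N M : nat) (Px : 'M[R]_N) (Py : 'M[R]_M)
    (V1 V2 : 'M[R]_(N, M)) : R :=
  ipP Px Py V1 V1 + ipP Px Py V2 V2.

Definition Bop {R : realType} (N M : nat) (Px : 'M[R]_N) (Py : 'M[R]_M)
    (SL SR SD SU : 'M[R]_(N, M)) (W : 'M[R]_(N, M)) : 'M[R]_(N, M) :=
  invmx Px *m (hmul SL (Lmx N *m W) + hmul SR (Rmx N *m W))
  + (hmul SD (W *m (Lmx M)^T) + hmul SU (W *m (Rmx M)^T)) *m (invmx Py)^T.

(* right-hand side of  V_t = - u1 o d_x V - u2 o d_y V + C V - eps curl^2 V + B V *)
Definition rhs1 {R : realType} (N M : nat) (eps : R) (Dx : 'M[R]_N) (Dy : 'M[R]_M)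
    (U1 U2 : 'M[R]_(N, M)) (B : 'M[R]_(N, M) -> 'M[R]_(N, M))
    (V1 V2 : 'M[R]_(N, M)) : 'M[R]_(N, M) :=
  - hmul U1 (dX Dx V1) - hmul U2 (dY Dy V1)
  + (hmul (- dY Dy U2) V1 + hmul (dY Dy U1) V2)
  - eps *: (- dY Dy (dY Dy V1) + dX Dx (dY Dy V2))
  + B V1.

Definition rhs2 {R : realType} (N M : nat) (eps : R) (Dx : 'M[R]_N) (Dy : 'M[R]_M)
    (U1 U2 : 'M[R]_(N, M)) (B : 'M[R]_(N, M) -> 'M[R]_(N, M))
    (V1 V2 : 'M[R]_(N, M)) : 'M[R]_(N, M) :=
  - hmul U1 (dX Dx V2) - hmul U2 (dY Dy V2)
  + (hmul (dX Dx U2) V1 - hmul (dX Dx U1) V2)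
  - eps *: (dX Dx (dY Dy V1) - dX Dx (dX Dx V2))
  + B V2.

Definition mxmaxabs {R : realType} (m n : nat) (A : 'M[R]_(m, n)) : R :=
  \big[Num.max/0]_(i < m) \big[Num.max/0]_(j < n) `|A i j|.

Definition rowpen {R : realType} (N M : nat) (k : nat) (s : R) : 'M[R]_(N, M) :=
  \matrix_(i, j) (if (i : nat) == k then s else 0).
Definition colpen {R : realType} (N M : nat) (k : nat) (s : R) : 'M[R]_(N, M) :=
  \matrix_(i, j) (if (j : nat) == k then s else 0).

(* Main.v *)
Require Import Defs.
From HB Require Import structures.
From mathcomp Require Import all_boot all_order all_algebra.
From mathcomp Require Import all_classical all_reals all_analysis.
From mathcomp Require Import ring lra.
Set Implicit Arguments. Unset Strict Implicit. Unset Printing Implicit Defensive.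
Import Order.TTheory GRing.Theory Num.Theory.
Import numFieldNormedType.Exports.
Local Open Scope ring_scope.
Local Open Scope classical_set_scope.
Section S.
Variable R : realType.

Definition wt (n : nat) (p : 'I_n -> R) (i : 'I_n) : R := gstep n * p i.

Lemma Pmat_entry n (p : 'I_n -> R) i k : Pmat p i k = wt p i *+ (i == k).
Proof. by rewrite /Pmat /wt !mxE mulrnAr. Qed.

Lemma sum_delta n (F : 'I_n -> R) i : \sum_k (F k *+ (i == k)) = F i.
Proof.
rewrite (bigD1 i) //= eqxx mulr1n big1 ?addr0 // => k /negbTE.
by rewrite eq_sym => ->.
Qed.

Lemma Pmat_mul n m (p : 'I_n -> R) (X : 'M[R]_(n, m)) i j :
  (Pmat p *m X) i j = wt p i * X i j.
Proof.
rewrite mxE -[RHS](sum_delta (fun k => wt p i * X k j) i).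
by apply: eq_bigr => k _; rewrite Pmat_entry mulrnAl.
Qed.

Lemma mul_PmatT n m (p : 'I_m -> R) (X : 'M[R]_(n, m)) i j :
  (X *m (Pmat p)^T) i j = X i j * wt p j.
Proof.
rewrite mxE -[RHS](sum_delta (fun k => X i k * wt p j) j).
apply: eq_bigr => k _; rewrite [(_^T) _ _]mxE Pmat_entry mulrnAr eq_sym.
by []...
Qed.

Lemma gstep_gt0 n : (2 <= n)%N -> 0 < gstep n :> R.
Proof.
move=> hn; rewrite /gstep mul1r invr_gt0 ltr0n.
by case: n hn => [|[|n]].
Qed.

Lemma wt_gt0 n (p : 'I_n -> R) i : (2 <= n)%N -> (forall i, 0 < p i) -> 0 < wt p i.
Proof. by move=> hn hp; rewrite /wt mulr_gt0 // gstep_gt0. Qed.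

Lemma Pmat_unit n (p : 'I_n -> R) : (2 <= n)%N -> (forall i, 0 < p i) ->
  Pmat p \in unitmx.
Proof.
move=> hn hp; rewrite unitmxE /Pmat detZ det_diag unitfE mulf_neq0 //.
  by rewrite expf_neq0 // gt_eqF // gstep_gt0.
by apply/prodf_neq0 => i _; rewrite mxE gt_eqF.
Qed.

Lemma inv_left n m (p : 'I_n -> R) (X : 'M[R]_(n, m)) i j :
  (2 <= n)%N -> (forall i, 0 < p i) ->
  (invmx (Pmat p) *m X) i j = X i j / wt p i.
Proof.
move=> hn hp.
have h : X i j = wt p i * (invmx (Pmat p) *m X) i j.
  by rewrite -Pmat_mul mulmxA mulmxV ?Pmat_unit // mul1mx.
by rewrite h mulrC mulKf // gt_eqF // wt_gt0.
Qed.

Lemma inv_right n m (p : 'I_m -> R) (X : 'M[R]_(n, m)) i j :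
  (2 <= m)%N -> (forall i, 0 < p i) ->
  (X *m (invmx (Pmat p))^T) i j = X i j / wt p j.
Proof.
move=> hn hp.
have h : X i j = (X *m (invmx (Pmat p))^T) i j * wt p j.
  by rewrite -mul_PmatT -mulmxA -trmx_mul mulmxV ?Pmat_unit // trmx1 mulmx1.
by rewrite h mulfK // gt_eqF // wt_gt0.
Qed.

Lemma dX_entry n m (p : 'I_n -> R) Q (W : 'M[R]_(n, m)) i j :
  (2 <= n)%N -> (forall i, 0 < p i) ->
  dX (Dmat p Q) W i j = (\sum_k Q i k * W k j) / wt p i.
Proof.
by move=> hn hp; rewrite /dX /Dmat -mulmxA inv_left // mxE.
Qed.

Lemma dY_entry n m (p : 'I_m -> R) Q (W : 'M[R]_(n, m)) i j :
  (2 <= m)%N -> (forall i, 0 < p i) ->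
  dY (Dmat p Q) W i j = (\sum_k W i k * Q j k) / wt p j.
Proof.
move=> hn hp; rewrite /dY /Dmat trmx_mul mulmxA inv_right // mxE.
by congr (_ / _); apply: eq_bigr => k _; rewrite mxE.
Qed.

Definition ipw n m (wx : 'I_n -> R) (wy : 'I_m -> R) (A B : 'M[R]_(n, m)) : R :=
  \sum_i \sum_j wx i * wy j * A i j * B i j.

Lemma ipP_ipw n m (px : 'I_n -> R) (py : 'I_m -> R) V W :
  ipP (Pmat px) (Pmat py) V W = ipw (wt px) (wt py) V W.
Proof.
apply: eq_bigr => i _.
rewrite (bigD1 i) //=.
rewrite [X in _ + X]big1 ?addr0; last first.
  move=> k hk'; have hk : (i == k) = false.
    by apply/negbTE; move: hk'; rewrite eq_sym; case: (i == k).
  apply: big1 => j _; apply: big1 => l _.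
  by rewrite Pmat_entry hk mulr0n mul0r mulr0 mul0r.
apply: eq_bigr => j _.
rewrite (bigD1 j) //=.
rewrite [X in _ + X]big1 ?addr0; last first.
  move=> k hk'; have hk : (j == k) = false.
    by apply/negbTE; move: hk'; rewrite eq_sym; case: (j == k).
  by rewrite [Pmat py _ _]Pmat_entry hk mulr0n mulr0 mulr0 mul0r.
by rewrite !Pmat_entry !eqxx !mulr1n; ring.
Qed.


Lemma sum_delta2 n (F : 'I_n -> R) i (b : bool) :
  \sum_k F k * ((i == k) && b)%:R = F i * b%:R.
Proof.
rewrite -(sum_delta (fun k => F k * b%:R) i); apply: eq_bigr => k _.
by case: (i == k); case: b; rewrite ?mulr1n ?mulr0n ?mulr0 ?mulr1.
Qed.

Definition bd n (i : 'I_n) : R := ((i : nat) == n.-1)%:R - ((i : nat) == 0%N)%:R.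

Lemma sbpx n m (px : 'I_n -> R) Q (wy : 'I_m -> R) (V W : 'M[R]_(n, m)) :
  (2 <= n)%N -> SBP px Q ->
  ipw (wt px) wy V (dX (Dmat px Q) W) + ipw (wt px) wy (dX (Dmat px Q) V) W
  = \sum_i \sum_j wy j * bd i * V i j * W i j.
Proof.
move=> hn [hp hQ].
have e1 : ipw (wt px) wy V (dX (Dmat px Q) W) =
  \sum_i \sum_j \sum_k wy j * V i j * Q i k * W k j.
  apply: eq_bigr => i _; apply: eq_bigr => j _.
  rewrite dX_entry // !(mulr_suml, mulr_sumr); apply: eq_bigr => k _.
  have := wt_gt0 i hn hp; move=> /gt_eqF/negbT hw.
  by field.
have e2 : ipw (wt px) wy (dX (Dmat px Q) V) W =
  \sum_i \sum_j \sum_k wy j * V i j * Q k i * W k j.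
  rewrite /ipw.
  have -> : \sum_i \sum_j wt px i * wy j * dX (Dmat px Q) V i j * W i j =
     \sum_a \sum_j \sum_b wy j * V b j * Q a b * W a j.
    apply: eq_bigr => i _; apply: eq_bigr => j _.
    rewrite dX_entry // !(mulr_suml, mulr_sumr); apply: eq_bigr => k _.
    have := wt_gt0 i hn hp; move=> /gt_eqF/negbT hw.
    by field.
  rewrite exchange_big /=.
  rewrite (eq_bigr (fun j => \sum_b \sum_a wy j * V b j * Q a b * W a j)); last first.
    by move=> j _; rewrite exchange_big.
  by rewrite exchange_big.
rewrite e1 e2 -big_split /=; apply: eq_bigr => i _.
rewrite -big_split /=; apply: eq_bigr => j _.
rewrite -big_split /=.
have hQe : forall k, Q i k + Q k i =
   ((i == k) && ((i : nat) == n.-1))%:R - ((i == k) && ((i : nat) == 0%N))%:R.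
  move=> k; have := congr1 (fun A : 'M[R]_n => A i k) hQ.
  by rewrite !mxE /=.
rewrite (eq_bigr (fun k => (wy j * V i j * W k j) *
   (((i == k) && ((i : nat) == n.-1))%:R - ((i == k) && ((i : nat) == 0%N))%:R))); last first.
  by move=> k _; rewrite -hQe; ring.
rewrite (eq_bigr (fun k => (wy j * V i j * W k j) * ((i == k) && ((i : nat) == n.-1))%:R
   - (wy j * V i j * W k j) * ((i == k) && ((i : nat) == 0%N))%:R)); last first.
  by move=> k _; rewrite mulrBr.
rewrite sumrB !sum_delta2 /bd; ring.
Qed.

Definition ipwT n m (wx : 'I_n -> R) (wy : 'I_m -> R) A B :
  ipw wx wy A B = ipw wy wx A^T B^T.
Proof.
rewrite /ipw exchange_big /=; apply: eq_bigr => j _; apply: eq_bigr => i _.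
by rewrite !mxE; ring.
Qed.

Lemma dY_T n m (D : 'M[R]_m) (W : 'M[R]_(n, m)) : (dY D W)^T = dX D W^T.
Proof. by rewrite /dY /dX trmx_mul trmxK. Qed.


Section IPW.
Variables (n m : nat) (wx : 'I_n -> R) (wy : 'I_m -> R).
Implicit Types A B C : 'M[R]_(n, m).

Lemma ipwDr A B C : ipw wx wy A (B + C) = ipw wx wy A B + ipw wx wy A C.
Proof.
rewrite /ipw -big_split; apply: eq_bigr => i _; rewrite -big_split.
by apply: eq_bigr => j _; rewrite !mxE mulrDr.
Qed.
Lemma ipwBr A B C : ipw wx wy A (B - C) = ipw wx wy A B - ipw wx wy A C.
Proof.
rewrite /ipw -sumrB; apply: eq_bigr => i _; rewrite -sumrB.
by apply: eq_bigr => j _; rewrite !mxE; ring.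
Qed.
Lemma ipwNr A B : ipw wx wy A (- B) = - ipw wx wy A B.
Proof.
rewrite /ipw -sumrN; apply: eq_bigr => i _; rewrite -sumrN.
by apply: eq_bigr => j _; rewrite !mxE; ring.
Qed.
Lemma ipwZr A B (c : R) : ipw wx wy A (c *: B) = c * ipw wx wy A B.
Proof.
rewrite /ipw mulr_sumr; apply: eq_bigr => i _; rewrite mulr_sumr.
by apply: eq_bigr => j _; rewrite !mxE; ring.
Qed.
Lemma ipwC A B : ipw wx wy A B = ipw wx wy B A.
Proof. by apply: eq_bigr => i _; apply: eq_bigr => j _; ring. Qed.
Lemma ipwBl A B C : ipw wx wy (A - B) C = ipw wx wy A C - ipw wx wy B C.
Proof. by rewrite ipwC ipwBr ipwC [ipw _ _ C B]ipwC. Qed.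
End IPW.

Definition bdx n m (wy : 'I_m -> R) (A B : 'M[R]_(n, m)) : R :=
  \sum_i \sum_j wy j * bd i * A i j * B i j.
Definition bdy n m (wx : 'I_n -> R) (A B : 'M[R]_(n, m)) : R :=
  \sum_i \sum_j wx i * bd j * A i j * B i j.

Lemma sbpy n m (py : 'I_m -> R) Q (wx : 'I_n -> R) (V W : 'M[R]_(n, m)) :
  (2 <= m)%N -> SBP py Q ->
  ipw wx (wt py) V (dY (Dmat py Q) W) + ipw wx (wt py) (dY (Dmat py Q) V) W
  = bdy wx V W.
Proof.
move=> hm hQ.
rewrite !(@ipwT n m wx) !dY_T (sbpx _ _ _ hm hQ) /bdy exchange_big /=.
by apply: eq_bigr => i _; apply: eq_bigr => j _; rewrite !mxE.
Qed.

Lemma visc_id n m (px : 'I_n -> R) Qx (py : 'I_m -> R) Qy (V1 V2 : 'M[R]_(n, m)) :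
  (2 <= n)%N -> (2 <= m)%N -> SBP px Qx -> SBP py Qy ->
  let Dx := Dmat px Qx in let Dy := Dmat py Qy in
  let w := dX Dx V2 - dY Dy V1 in
  ipw (wt px) (wt py) V1 (- dY Dy (dY Dy V1) + dX Dx (dY Dy V2))
  + ipw (wt px) (wt py) V2 (dX Dx (dY Dy V1) - dX Dx (dX Dx V2))
  = ipw (wt px) (wt py) w w + bdy (wt px) V1 w - bdx (wt py) V2 w.
Proof.
move=> hn hm hx hy Dx Dy w.
have e1 : - dY Dy (dY Dy V1) + dX Dx (dY Dy V2) = dY Dy w.
  by rewrite /w /dY /dX mulmxBl mulmxA addrC.
have e2 : dX Dx (dY Dy V1) - dX Dx (dX Dx V2) = - dX Dx w.
  by rewrite /w /dX /dY mulmxBr opprB.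
rewrite e1 e2 ipwNr.
have s1 := sbpx (wt py) V2 w hn hx.
have s2 := sbpy (wt px) V1 w hm hy.
rewrite /bdx.
have -> : ipw (wt px) (wt py) w w =
  ipw (wt px) (wt py) (dX Dx V2) w - ipw (wt px) (wt py) (dY Dy V1) w.
  by rewrite -ipwBl.
rewrite -s1 -s2 /Dx /Dy; ring.
Qed.


Lemma addE n m (A B : 'M[R]_(n, m)) i j : (A + B) i j = A i j + B i j.
Proof. by rewrite mxE. Qed.
Lemma hmulE n m (A B : 'M[R]_(n, m)) i j : hmul A B i j = A i j * B i j.
Proof. by rewrite mxE. Qed.

Lemma Lmx_mul n m (V : 'M[R]_(n, m)) i j :
  (Lmx n *m V) i j = V i j * ((i : nat) == 0%N)%:R.
Proof.
rewrite mxE (eq_bigr (fun k => V k j * ((i == k) && ((i : nat) == 0%N))%:R)) ?sum_delta2 //.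
by move=> k _; rewrite mxE mulrC.
Qed.
Lemma Rmx_mul n m (V : 'M[R]_(n, m)) i j :
  (Rmx n *m V) i j = V i j * ((i : nat) == n.-1)%:R.
Proof.
rewrite mxE (eq_bigr (fun k => V k j * ((i == k) && ((i : nat) == n.-1))%:R)) ?sum_delta2 //.
by move=> k _; rewrite mxE mulrC.
Qed.
Lemma mul_LmxT n m (V : 'M[R]_(n, m)) i j :
  (V *m (Lmx m)^T) i j = V i j * ((j : nat) == 0%N)%:R.
Proof.
rewrite mxE (eq_bigr (fun k => V i k * ((j == k) && ((j : nat) == 0%N))%:R)) ?sum_delta2 //.
by move=> k _; rewrite !mxE.
Qed.
Lemma mul_RmxT n m (V : 'M[R]_(n, m)) i j :
  (V *m (Rmx m)^T) i j = V i j * ((j : nat) == m.-1)%:R.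
Proof.
rewrite mxE (eq_bigr (fun k => V i k * ((j == k) && ((j : nat) == m.-1))%:R)) ?sum_delta2 //.
by move=> k _; rewrite !mxE.
Qed.

Lemma pen_id n m (px : 'I_n -> R) (py : 'I_m -> R) SL SR SD SU (V : 'M[R]_(n, m)) :
  (2 <= n)%N -> (2 <= m)%N -> (forall i, 0 < px i) -> (forall j, 0 < py j) ->
  ipw (wt px) (wt py) V (Bop (Pmat px) (Pmat py) SL SR SD SU V) =
  \sum_i \sum_j (wt py j * (SL i j * ((i : nat) == 0%N)%:R + SR i j * ((i : nat) == n.-1)%:R)
     + wt px i * (SD i j * ((j : nat) == 0%N)%:R + SU i j * ((j : nat) == m.-1)%:R))
     * V i j ^+ 2.
Proof.
move=> hn hm hpx hpy; apply: eq_bigr => i _; apply: eq_bigr => j _.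
rewrite /Bop addE inv_left // inv_right // !addE !hmulE.
rewrite Lmx_mul Rmx_mul mul_LmxT mul_RmxT.
have := wt_gt0 i hn hpx; move=> /gt_eqF/negbT h1.
have := wt_gt0 j hm hpy; move=> /gt_eqF/negbT h2.
by field; rewrite h1 h2.
Qed.


Lemma discr (a s b : R) : 0 <= a -> (forall t, 0 <= t ^+ 2 * a - 2 * t * s + b) ->
  s ^+ 2 <= a * b.
Proof.
move=> ha ht; case: (ltrP 0 a) => [a0|a0].
  have := ht (s / a).
  have -> : (s / a) ^+ 2 * a - 2 * (s / a) * s + b = (a * b - s ^+ 2) / a.
    by field; rewrite gt_eqF.
  move=> H; have : 0 <= (a * b - s ^+ 2) / a * a by rewrite mulr_ge0 // ltW.
  by rewrite divfK ?gt_eqF // subr_ge0.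
have a00 : a = 0 by apply/eqP; rewrite eq_le a0 ha.
rewrite a00 mul0r.
case: (eqVneq s 0) => [->|s0]; first by rewrite expr0n.
have := ht ((b + 1) / (2 * s)).
have -> : ((b + 1) / (2 * s)) ^+ 2 * a - 2 * ((b + 1) / (2 * s)) * s + b = -1.
  by rewrite a00; field.
by rewrite ler0N1.
Qed.

Lemma ipw_ge0 n m (wx : 'I_n -> R) (wy : 'I_m -> R) A :
  (forall i, 0 <= wx i) -> (forall j, 0 <= wy j) -> 0 <= ipw wx wy A A.
Proof.
move=> hx hy; apply: sumr_ge0 => i _; apply: sumr_ge0 => j _.
by rewrite -mulrA; apply: mulr_ge0; [apply: mulr_ge0|rewrite -expr2 sqr_ge0].
Qed.

Lemma ipw_cs n m (wx : 'I_n -> R) (wy : 'I_m -> R) A B :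
  (forall i, 0 <= wx i) -> (forall j, 0 <= wy j) ->
  ipw wx wy A B <= Num.sqrt (ipw wx wy A A) * Num.sqrt (ipw wx wy B B).
Proof.
move=> hx hy.
have h := @discr (ipw wx wy A A) (ipw wx wy A B) (ipw wx wy B B) (ipw_ge0 A hx hy).
have : ipw wx wy A B ^+ 2 <= ipw wx wy A A * ipw wx wy B B.
  apply: h => t.
  have := ipw_ge0 (t *: A - B) hx hy.
  rewrite ipwBr !ipwBl ipwZr [ipw _ _ (t *: A) A]ipwC ipwZr [ipw _ _ (t *: A) B]ipwC ipwZr.
  by rewrite [ipw _ _ B A]ipwC; congr (_ <= _); ring.
move=> /ler_wsqrtr.
rewrite sqrtr_sqr sqrtrM ?ipw_ge0 // => H.
by apply: le_trans H; rewrite ler_norm.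
Qed.

Lemma normP_ipw n (px : 'I_n -> R) (w : 'cV[R]_n) :
  normP (Pmat px) w = Num.sqrt (ipw (wt px) (fun _ => 1) w w).
Proof.
rewrite /normP -mulmxA mxE; congr Num.sqrt; apply: eq_bigr => i _.
rewrite big_ord1 Pmat_mul !mxE; ring.
Qed.

Lemma ipw1E n (wx : 'I_n -> R) (A B : 'cV[R]_n) :
  ipw wx (fun _ : 'I_1 => 1) A B = \sum_i wx i * A i 0 * B i 0.
Proof. by apply: eq_bigr => i _; rewrite big_ord1 mulr1. Qed.

Lemma conv_col n (px : 'I_n -> R) Q (g w : 'cV[R]_n) (K : R) :
  (2 <= n)%N -> SBP px Q ->
  normP (Pmat px) (Dmat px Q *m hmul g w - hmul g (Dmat px Q *m w))
     <= K * normP (Pmat px) w ->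
  - \sum_i wt px i * w i 0 * (g i 0 * (Dmat px Q *m w) i 0)
   <= (K * \sum_i wt px i * w i 0 ^+ 2 - \sum_i bd i * g i 0 * w i 0 ^+ 2) / 2.
Proof.
move=> hn hQ hc.
have hp := hQ.1.
set D := Dmat px Q.
set wy1 := (fun _ : 'I_1 => (1 : R)).
have hx : forall i, 0 <= wt px i by move=> i; apply/ltW/wt_gt0.
have hy : forall j, 0 <= wy1 j by move=> j; rewrite /wy1.
have s := sbpx wy1 w (hmul g w) hn hQ.
rewrite /dX -/D in s.
set S1 := \sum_i wt px i * w i 0 * (g i 0 * (D *m w) i 0).
have e1 : ipw (wt px) wy1 (D *m w) (hmul g w) = S1.
  rewrite ipw1E; apply: eq_bigr => i _; rewrite hmulE; ring.
have e2 : ipw (wt px) wy1 w (hmul g (D *m w)) = S1.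
  rewrite ipw1E; apply: eq_bigr => i _; rewrite hmulE; ring.
have e3 : \sum_i \sum_j wy1 j * bd i * w i j * hmul g w i j
        = \sum_i bd i * g i 0 * w i 0 ^+ 2.
  apply: eq_bigr => i _; rewrite big_ord1 hmulE /wy1; ring.
have e4 : \sum_i wt px i * w i 0 ^+ 2 = ipw (wt px) wy1 w w.
  rewrite ipw1E; apply: eq_bigr => i _; ring.
set c := D *m hmul g w - hmul g (D *m w).
have e5 : ipw (wt px) wy1 w c = ipw (wt px) wy1 w (D *m hmul g w) - S1.
  by rewrite /c ipwBr e2.
have cs := ipw_cs w c hx hy.
rewrite -!normP_ipw in cs.
have nw0 : 0 <= normP (Pmat px) w by apply: sqrtr_ge0.
have h6 : ipw (wt px) wy1 w c <= K * ipw (wt px) wy1 w w.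
  apply: (le_trans cs).
  have -> : ipw (wt px) wy1 w w = normP (Pmat px) w ^+ 2.
    by rewrite normP_ipw sqr_sqrtr // ipw_ge0.
  rewrite expr2 mulrA [K * _]mulrC -mulrA.
  by apply: ler_wpM2l.
rewrite e4; rewrite e3 e1 in s.
have : 2 * S1 = \sum_i bd i * g i 0 * w i 0 ^+ 2 - ipw (wt px) wy1 w c.
  by rewrite e5 -s; ring.
move=> H.
have H2 : \sum_i bd i * g i 0 * w i 0 ^+ 2 - K * ipw (wt px) wy1 w w <= 2 * S1.
  by rewrite H lerD2l lerN2.
set bb := \sum_i bd i * g i 0 * w i 0 ^+ 2 in H2 *.
set aa := ipw (wt px) wy1 w w in H2 *.
lra.
Qed.

Lemma mulcolE n m k (D : 'M[R]_(n, k)) (V : 'M[R]_(k, m)) j i :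
  (D *m col j V) i 0 = (D *m V) i j.
Proof. by rewrite !mxE; apply: eq_bigr => l _; rewrite mxE. Qed.

Lemma sum2_half n m (F G : 'I_n -> 'I_m -> R) (K : R) :
  (K * \sum_i \sum_j F i j - \sum_i \sum_j G i j) / 2
  = \sum_j ((K * \sum_i F i j - \sum_i G i j) / 2).
Proof.
rewrite [\sum_i \sum_j F i j]exchange_big [\sum_i \sum_j G i j]exchange_big /=.
rewrite mulr_sumr -sumrB mulr_suml; apply: eq_bigr => j _; by [].
Qed.

Lemma conv_x n m (px : 'I_n -> R) Q (wy : 'I_m -> R) (U V : 'M[R]_(n, m)) (K : R) :
  (2 <= n)%N -> SBP px Q -> (forall j, 0 <= wy j) ->
  (forall j, normP (Pmat px) (Dmat px Q *m hmul (col j U) (col j V)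
       - hmul (col j U) (Dmat px Q *m col j V)) <= K * normP (Pmat px) (col j V)) ->
  - ipw (wt px) wy V (hmul U (dX (Dmat px Q) V))
  <= (K * ipw (wt px) wy V V - \sum_i \sum_j wy j * bd i * U i j * V i j ^+ 2) / 2.
Proof.
move=> hn hQ hy hc.
have -> : - ipw (wt px) wy V (hmul U (dX (Dmat px Q) V)) =
  \sum_j wy j * (- \sum_i wt px i * col j V i 0 *
       (col j U i 0 * (Dmat px Q *m col j V) i 0)).
  rewrite /ipw exchange_big /= -sumrN; apply: eq_bigr => j _.
  rewrite mulrN mulr_sumr; congr (- _); apply: eq_bigr => i _.
  rewrite mulcolE !mxE /dX; ring.
rewrite /ipw.
rewrite (sum2_half (fun i j => wt px i * wy j * V i j * V i j)
                   (fun i j => wy j * bd i * U i j * V i j ^+ 2)).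
apply: ler_sum => j _.
have := conv_col hn hQ (hc j).
move=> /(ler_wpM2l (hy j)) H; apply: (le_trans H).
have eA : \sum_i wt px i * wy j * V i j * V i j
   = wy j * \sum_i wt px i * col j V i 0 ^+ 2.
  by rewrite mulr_sumr; apply: eq_bigr => i _; rewrite !mxE; ring.
have eB : \sum_i wy j * bd i * U i j * V i j ^+ 2
   = wy j * \sum_i bd i * col j U i 0 * col j V i 0 ^+ 2.
  by rewrite mulr_sumr; apply: eq_bigr => i _; rewrite !mxE; ring.
by rewrite eA eB le_eqVlt; apply/orP; left; apply/eqP; ring.
Qed.


Lemma hmulT n m (A B : 'M[R]_(n, m)) : (hmul A B)^T = hmul A^T B^T.
Proof. by apply/matrixP => i j; rewrite !mxE. Qed.

Lemma conv_y n m (py : 'I_m -> R) Q (wx : 'I_n -> R) (U V : 'M[R]_(n, m)) (K : R) :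
  (2 <= m)%N -> SBP py Q -> (forall i, 0 <= wx i) ->
  (forall i, normP (Pmat py) (Dmat py Q *m hmul (col i U^T) (col i V^T)
       - hmul (col i U^T) (Dmat py Q *m col i V^T)) <= K * normP (Pmat py) (col i V^T)) ->
  - ipw wx (wt py) V (hmul U (dY (Dmat py Q) V))
  <= (K * ipw wx (wt py) V V - \sum_i \sum_j wx i * bd j * U i j * V i j ^+ 2) / 2.
Proof.
move=> hm hQ hx hc.
rewrite !(@ipwT n m wx) hmulT dY_T.
have := conv_x hm hQ hx hc.
have -> : \sum_i \sum_j wx j * bd i * U^T i j * V^T i j ^+ 2
   = \sum_i \sum_j wx i * bd j * U i j * V i j ^+ 2.
  by rewrite exchange_big; apply: eq_bigr => i _; apply: eq_bigr => j _; rewrite !mxE.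
by [].
Qed.


Lemma bigmax_ge n (F : 'I_n -> R) k : F k <= \big[Num.max/0]_(i < n) F i.
Proof. by rewrite (bigD1 k) //= le_max lexx. Qed.

Lemma mxmaxabs_ge n m (A : 'M[R]_(n, m)) i j : `|A i j| <= mxmaxabs A.
Proof.
apply: (le_trans _ (bigmax_ge _ i)).
exact: (bigmax_ge (fun j => `|A i j|) j).
Qed.

Lemma cterm_pt (w v1 v2 a b c d mm : R) : 0 <= w ->
  `|a| <= mm -> `|b| <= mm -> `|c| <= mm -> `|d| <= mm ->
  w * v1 * (- a * v1 + b * v2) + w * v2 * (c * v1 - d * v2)
  <= 2 * mm * (w * v1 * v1 + w * v2 * v2).
Proof.
move=> hw ha hb hc hd.
have L : forall x, `|x| <= mm -> x <= mm /\ - x <= mm.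
  move=> x hx; split; first exact: le_trans (ler_norm x) hx.
  by rewrite -normrN in hx; exact: le_trans (ler_norm _) hx.
have [a2 a1] := L a ha; have [b2 b1] := L b hb.
have [c2 c1] := L c hc; have [d2 d1] := L d hd.
have s1 : 0 <= v1 * v1 by rewrite -expr2 sqr_ge0.
have s2 : 0 <= v2 * v2 by rewrite -expr2 sqr_ge0.
have sp : 0 <= (v1 + v2) * (v1 + v2) by rewrite -expr2 sqr_ge0.
have sm : 0 <= (v1 - v2) * (v1 - v2) by rewrite -expr2 sqr_ge0.
have P : forall x y : R, 0 <= x -> 0 <= y -> 0 <= x * y by move=> x y; apply: mulr_ge0.
have G : forall x y : R, x <= y -> 0 <= y - x by move=> x y; rewrite subr_ge0.
have k1 := P _ _ (P _ _ hw (G _ _ a1)) s1.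
have k2 := P _ _ (P _ _ hw (G _ _ d2)) s2.
have k3 := P _ _ (P _ _ hw (G _ _ b2)) sp.
have k4 := P _ _ (P _ _ hw (G _ _ b1)) sm.
have k5 := P _ _ (P _ _ hw (G _ _ c2)) sp.
have k6 := P _ _ (P _ _ hw (G _ _ c1)) sm.
have k7 := P _ _ hw s1.
have k8 := P _ _ hw s2.
nra.
Qed.


Lemma visc_pt (wx wy w v1 v2 bx by_ ex ey : R) : 0 < wx -> 0 < wy ->
  ((bx = 0 /\ ex = 0) \/ (bx ^+ 2 = 1 /\ 2 * wx * ex <= -1)) ->
  ((by_ = 0 /\ ey = 0) \/ (by_ ^+ 2 = 1 /\ 2 * wy * ey <= -1)) ->
  - (wx * wy * w * w) - wx * by_ * v1 * w + wy * bx * v2 * w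
    + (wy * ex + wx * ey) * (v1 ^+ 2 + v2 ^+ 2) <= 0.
Proof.
move=> hx hy hX hY.
set F := (X in X <= 0).
suff : 2 * wx * wy * F <= 0.
  by rewrite pmulr_rle0 // !mulr_gt0.
have q0 : 0 <= v1 ^+ 2 + v2 ^+ 2 by rewrite addr_ge0 // sqr_ge0.
have P : forall x y : R, 0 <= x -> 0 <= y -> 0 <= x * y by move=> x y; apply: mulr_ge0.
have G : forall x y : R, x <= y -> 0 <= y - x by move=> x y; rewrite subr_ge0.
have S : forall x : R, 0 <= x ^+ 2 by move=> x; apply: sqr_ge0.
have wx2 := S wx; have wy2 := S wy.
have s1 := P _ _ wx2 (S (wy * w + by_ * v1)).
have s2 := P _ _ wy2 (S (wx * w - bx * v2)).
have s3 := P _ _ wx2 (S (wy * w)).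
have s4 := P _ _ wx2 (S v2).
have s5 := P _ _ wy2 (S v1).
have s6 := P _ _ wy2 (S (wx * w)).
have s7 := P _ _ wy2 (S v2).
have s8 := P _ _ wx2 (S v1).
case: hX => [[bx0 ex0]|[bx1 ex1]]; case: hY => [[by0 ey0]|[by1 ey1]].
- rewrite /F bx0 ex0 by0 ey0.
  have := P _ _ wx2 (S (wy * w)); lra.
- have t := P _ _ (P _ _ wx2 q0) (G _ _ ey1).
  have e1 : wx ^+ 2 * v1 ^+ 2 * by_ ^+ 2 = wx ^+ 2 * v1 ^+ 2 by rewrite by1 mulr1.
  rewrite /F bx0 ex0; move: s1 s3 s4 t e1; rewrite !expr2; nra.
- have t := P _ _ (P _ _ wy2 q0) (G _ _ ex1).
  have e1 : wy ^+ 2 * v2 ^+ 2 * bx ^+ 2 = wy ^+ 2 * v2 ^+ 2 by rewrite bx1 mulr1.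
  rewrite /F by0 ey0; move: s2 s6 s5 t e1; rewrite !expr2; nra.
- have t1 := P _ _ (P _ _ wy2 q0) (G _ _ ex1).
  have t2 := P _ _ (P _ _ wx2 q0) (G _ _ ey1).
  have e1 : wx ^+ 2 * v1 ^+ 2 * by_ ^+ 2 = wx ^+ 2 * v1 ^+ 2 by rewrite by1 mulr1.
  have e2 : wy ^+ 2 * v2 ^+ 2 * bx ^+ 2 = wy ^+ 2 * v2 ^+ 2 by rewrite bx1 mulr1.
  rewrite /F; move: s1 s2 s5 s4 t1 t2 e1 e2; rewrite !expr2; nra.
Qed.


Lemma convb_1 (b u l : R) :
  (b = 0 /\ l = 0) \/ (b = 1 /\ l <= Num.min u 0 / 2) \/ (b = -1 /\ l <= - (Num.max u 0 / 2)) ->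
  l - b * u / 2 <= 0.
Proof.
have h1 : Num.min u 0 <= u by rewrite ge_min lexx.
have h2 : u <= Num.max u 0 by rewrite le_max lexx.
case=> [[-> ->]|[[-> hl]|[-> hl]]]; lra.
Qed.

Lemma convb_pt (wx wy bx by_ u1 u2 lx ly v : R) : 0 <= wx -> 0 <= wy ->
  (bx = 0 /\ lx = 0) \/ (bx = 1 /\ lx <= Num.min u1 0 / 2) \/ (bx = -1 /\ lx <= - (Num.max u1 0 / 2)) ->
  (by_ = 0 /\ ly = 0) \/ (by_ = 1 /\ ly <= Num.min u2 0 / 2) \/ (by_ = -1 /\ ly <= - (Num.max u2 0 / 2)) ->
  - (wy * bx * u1 * v ^+ 2) / 2 - (wx * by_ * u2 * v ^+ 2) / 2 + (wy * lx + wx * ly) * v ^+ 2 <= 0.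
Proof.
move=> hx hy /convb_1 h1 /convb_1 h2.
have -> : - (wy * bx * u1 * v ^+ 2) / 2 - (wx * by_ * u2 * v ^+ 2) / 2 + (wy * lx + wx * ly) * v ^+ 2
  = (wy * v ^+ 2) * (lx - bx * u1 / 2) + (wx * v ^+ 2) * (ly - by_ * u2 / 2) by ring.
have a1 : 0 <= wy * v ^+ 2 by rewrite mulr_ge0 // sqr_ge0.
have a2 : 0 <= wx * v ^+ 2 by rewrite mulr_ge0 // sqr_ge0.
rewrite -[0]addr0 lerD //; [rewrite mulrC; exact: mulr_le0_ge0 | rewrite mulrC; exact: mulr_le0_ge0].
Qed.


Lemma le_eqs (a a' b b' : R) : a = a' -> b' = b -> a' <= b' -> a <= b.
Proof. by move=> -> <-. Qed.

Lemma cterm_sum n m (wx : 'I_n -> R) (wy : 'I_m -> R) (A B C D V1 V2 : 'M[R]_(n, m)) mm :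
  (forall i, 0 <= wx i) -> (forall j, 0 <= wy j) ->
  (forall i j, `|A i j| <= mm) -> (forall i j, `|B i j| <= mm) ->
  (forall i j, `|C i j| <= mm) -> (forall i j, `|D i j| <= mm) ->
  ipw wx wy V1 (hmul (- A) V1 + hmul B V2) + ipw wx wy V2 (hmul C V1 - hmul D V2)
  <= 2 * mm * (ipw wx wy V1 V1 + ipw wx wy V2 V2).
Proof.
move=> hx hy hA hB hC hD.
rewrite /ipw -!big_split /= mulr_sumr; apply: ler_sum => i _.
rewrite -!big_split /= mulr_sumr; apply: ler_sum => j _.
apply: (le_eqs _ _ (cterm_pt (V1 i j) (V2 i j) (mulr_ge0 (hx i) (hy j))
   (hA i j) (hB i j) (hC i j) (hD i j))).
  by rewrite !addE !hmulE !mxE; ring.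
by ring.
Qed.


Section S2.
Variables (n m : nat).
Definition s2 (F : 'I_n -> 'I_m -> R) := \sum_i \sum_j F i j.
Lemma s2D F G : s2 F + s2 G = s2 (fun i j => F i j + G i j).
Proof. by rewrite /s2 -big_split; apply: eq_bigr => i _; rewrite -big_split. Qed.
Lemma s2B F G : s2 F - s2 G = s2 (fun i j => F i j - G i j).
Proof. by rewrite /s2 -sumrB; apply: eq_bigr => i _; rewrite -sumrB. Qed.
Lemma s2N F : - s2 F = s2 (fun i j => - F i j).
Proof. by rewrite /s2 -sumrN; apply: eq_bigr => i _; rewrite -sumrN. Qed.
Lemma s2Z c F : c * s2 F = s2 (fun i j => c * F i j).
Proof. by rewrite /s2 mulr_sumr; apply: eq_bigr => i _; rewrite mulr_sumr. Qed.
Lemma s2Zr c F : s2 F / c = s2 (fun i j => F i j / c).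
Proof. by rewrite mulrC s2Z; apply: eq_bigr => i _; apply: eq_bigr => j _; rewrite mulrC. Qed.
Lemma s2_le0 F : (forall i j, F i j <= 0) -> s2 F <= 0.
Proof.
by move=> h; rewrite /s2; apply: sumr_le0 => i _; apply: sumr_le0 => j _.
Qed.
End S2.


Lemma bcase (n k : nat) (sl sr u l2 r2 wx g p : R) : (2 <= n)%N ->
  ((k == n.-1) -> sr <= Num.min u 0 / 2) -> ((k == 0%N) -> sl <= - (Num.max u 0 / 2)) ->
  r2 <= - (1 / (2 * p * g)) -> l2 <= - (1 / (2 * p * g)) ->
  ((k == 0%N) || (k == n.-1) -> wx = g * p) -> 0 < g * p ->
  let b : R := (k == n.-1)%:R - (k == 0%N)%:R in
  let lx := sl * (k == 0%N)%:R + sr * (k == n.-1)%:R in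
  let ex := (if k == 0%N then l2 else 0) * (k == 0%N)%:R
            + (if k == n.-1 then r2 else 0) * (k == n.-1)%:R in
  ((b = 0 /\ lx = 0) \/ (b = 1 /\ lx <= Num.min u 0 / 2) \/ (b = -1 /\ lx <= - (Num.max u 0 / 2)))
  /\ ((b = 0 /\ ex = 0) \/ (b ^+ 2 = 1 /\ 2 * wx * ex <= -1)).
Proof.
move=> hn hr hl hr2 hl2 hw gp b lx ex.
have key : forall c : R, c <= - (1 / (2 * p * g)) -> 2 * (g * p) * c <= -1.
  move=> c hc; have := ler_wpM2l (ltW (mulr_gt0 (ltr0Sn _ 1) gp)) hc.
  have -> : 2 * (g * p) * - (1 / (2 * p * g)) = -1.
    field; apply/andP; split; apply/eqP => h0; move: gp; rewrite h0 ?mul0r ?mulr0 ltxx //.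
  by [].
have nn : n.-1 != 0%N by rewrite -lt0n -ltnS (ltn_predK hn).
case: (eqVneq k 0%N) => [k0|k0].
  have k1 : (k == n.-1) = false by rewrite k0 eq_sym (negbTE nn).
  rewrite /b /lx /ex k0 eqxx.
  rewrite k0 in k1; rewrite k1 !mulr1 !mulr0 !addr0 sub0r.
  split; [right; right; split => //; apply: hl; exact/eqP|right; split; first by rewrite sqrrN expr1n].
  by rewrite (hw _) /=; [exact: (key _ hl2) | rewrite k0 eqxx].
case: (eqVneq k n.-1) => [k1|k1].
  rewrite /b /lx /ex (negbTE k0) k1 eqxx !mulr1 !mulr0 !add0r subr0.
  split; [right; left; split => //; apply: hr; exact/eqP|right; split; first by rewrite expr1n].
  by rewrite (hw _) /=; [exact: (key _ hr2) | rewrite k1 eqxx orbT].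
rewrite /b /lx /ex (negbTE k0) (negbTE k1) !mulr0 !addr0 subrr.
by split; left.
Qed.


Lemma s2_ge0 n m (F : 'I_n -> 'I_m -> R) : (forall i j, 0 <= F i j) -> 0 <= s2 F.
Proof. by move=> h; rewrite /s2; apply: sumr_ge0 => i _; apply: sumr_ge0 => j _. Qed.

Definition pcoef n m (px : 'I_n -> R) (py : 'I_m -> R) (SL SR SD SU : 'M[R]_(n, m)) i j :=
  wt py j * (SL i j * ((i : nat) == 0%N)%:R + SR i j * ((i : nat) == n.-1)%:R)
  + wt px i * (SD i j * ((j : nat) == 0%N)%:R + SU i j * ((j : nat) == m.-1)%:R).

Lemma bnd N M (px : 'I_N -> R) (py : 'I_M -> R) p
  (U1 U2 V1 V2 W SL SR SD SU sL' sR' sD' sU' : 'M[R]_(N, M)) (sL'' sR'' sD'' sU'' eps : R) :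
  (2 <= N)%N -> (2 <= M)%N -> 0 < eps -> 0 < p ->
  (forall i, 0 < px i) -> (forall j, 0 < py j) ->
  (forall i : 'I_N, ((i : nat) == 0%N) || ((i : nat) == N.-1) -> px i = p) ->
  (forall j : 'I_M, ((j : nat) == 0%N) || ((j : nat) == M.-1) -> py j = p) ->
  (forall (i : 'I_N) (j : 'I_M), (i : nat) == N.-1 -> sR' i j <= Num.min (U1 i j) 0 / 2) ->
  (forall (i : 'I_N) (j : 'I_M), (i : nat) == 0%N -> sL' i j <= - (Num.max (U1 i j) 0 / 2)) ->
  (forall (i : 'I_N) (j : 'I_M), (j : nat) == M.-1 -> sU' i j <= Num.min (U2 i j) 0 / 2) ->
  (forall (i : 'I_N) (j : 'I_M), (j : nat) == 0%N -> sD' i j <= - (Num.max (U2 i j) 0 / 2)) ->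
  sR'' <= - (1 / (2 * p * gstep N)) -> sL'' <= - (1 / (2 * p * gstep N)) ->
  sU'' <= - (1 / (2 * p * gstep M)) -> sD'' <= - (1 / (2 * p * gstep M)) ->
  (forall i j, SL i j = sL' i j + eps * (if (i : nat) == 0%N then sL'' else 0)) ->
  (forall i j, SR i j = sR' i j + eps * (if (i : nat) == N.-1 then sR'' else 0)) ->
  (forall i j, SD i j = sD' i j + eps * (if (j : nat) == 0%N then sD'' else 0)) ->
  (forall i j, SU i j = sU' i j + eps * (if (j : nat) == M.-1 then sU'' else 0)) ->
  0 <= s2 (fun i j => wt py j * bd i * U1 i j * V1 i j ^+ 2)
     + s2 (fun i j => wt px i * bd j * U2 i j * V1 i j ^+ 2)
     + s2 (fun i j => wt py j * bd i * U1 i j * V2 i j ^+ 2)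
     + s2 (fun i j => wt px i * bd j * U2 i j * V2 i j ^+ 2)
     + (2 * eps) * (s2 (fun i j => wt px i * wt py j * W i j * W i j)
                    + s2 (fun i j => wt px i * bd j * V1 i j * W i j)
                    - s2 (fun i j => wt py j * bd i * V2 i j * W i j))
     - 2 * s2 (fun i j => pcoef px py SL SR SD SU i j * V1 i j ^+ 2)
     - 2 * s2 (fun i j => pcoef px py SL SR SD SU i j * V2 i j ^+ 2).
Proof.
move=> hN hM he hp hpx0 hpy0 hpx hpy hR hL hU hD hR2 hL2 hU2 hD2 hSL hSR hSD hSU.
rewrite !(s2Z, s2D, s2B); apply: s2_ge0 => i j.
have gp : forall n, (2 <= n)%N -> 0 < gstep n * p.
  by move=> n hn; rewrite mulr_gt0 // gstep_gt0.
have ex : ((i : nat) == 0%N) || ((i : nat) == N.-1) -> wt px i = gstep N * p.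
  by move=> h; rewrite /wt hpx.
have ey : ((j : nat) == 0%N) || ((j : nat) == M.-1) -> wt py j = gstep M * p.
  by move=> h; rewrite /wt hpy.
have [cx vx] := @bcase N i (sL' i j) (sR' i j) (U1 i j) sL'' sR'' (wt px i) (gstep N) p hN
  (hR i j) (hL i j) hR2 hL2 ex (gp _ hN).
have [cy vy] := @bcase M j (sD' i j) (sU' i j) (U2 i j) sD'' sU'' (wt py j) (gstep M) p hM
  (hU i j) (hD i j) hU2 hD2 ey (gp _ hM).
have wx0 := wt_gt0 i hN hpx0.
have wy0 := wt_gt0 j hM hpy0.
have c1 := convb_pt (V1 i j) (ltW wx0) (ltW wy0) cx cy.
have c2 := convb_pt (V2 i j) (ltW wx0) (ltW wy0) cx cy.
have v := visc_pt (W i j) (V1 i j) (V2 i j) wx0 wy0 vx vy.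
have v' := mulr_ge0_le0 (ltW he) v.
rewrite /pcoef !hSL !hSR !hSD !hSU /bd.
move: c1 c2 v'; set e1 := (i : nat) == 0%N; set e2 := (i : nat) == N.-1.
set e3 := (j : nat) == 0%N; set e4 := (j : nat) == M.-1.
lra.
Qed.


Lemma maxL (x y : R) : x <= Num.max x y. Proof. by rewrite le_max lexx. Qed.
Lemma maxR (x y : R) : y <= Num.max x y. Proof. by rewrite le_max lexx orbT. Qed.

Lemma ipw_rhs n m (wx : 'I_n -> R) (wy : 'I_m -> R) (A X Y Z Wv T : 'M[R]_(n, m)) e :
  ipw wx wy A (- X - Y + Z - e *: Wv + T)
  = - ipw wx wy A X - ipw wx wy A Y + ipw wx wy A Z - e * ipw wx wy A Wv + ipw wx wy A T.
Proof. by rewrite !ipwDr !ipwNr ipwZr. Qed.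

Lemma dE_bound N M (px : 'I_N -> R) Qx (py : 'I_M -> R) Qy p
  (sL' sR' sD' sU' : 'M[R]_(N, M)) (sL'' sR'' sD'' sU'' : R) (U1 U2 V1 V2 : 'M[R]_(N, M))
  (eps K1 K2 : R) :
  let Px := Pmat px in let Py := Pmat py in
  let Dx := Dmat px Qx in let Dy := Dmat py Qy in
  let SL := sL' + eps *: rowpen N M 0 sL'' in
  let SR := sR' + eps *: rowpen N M N.-1 sR'' in
  let SD := sD' + eps *: colpen N M 0 sD'' in
  let SU := sU' + eps *: colpen N M M.-1 sU'' in
  let B := Bop Px Py SL SR SD SU in
  (2 <= N)%N -> (2 <= M)%N -> 0 < eps ->
  SBP px Qx -> SBP py Qy ->
  (forall i : 'I_N, ((i : nat) == 0%N) || ((i : nat) == N.-1) -> px i = p) ->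
  (forall j : 'I_M, ((j : nat) == 0%N) || ((j : nat) == M.-1) -> py j = p) ->
  (forall (i : 'I_N) (j : 'I_M), (i : nat) == N.-1 -> sR' i j <= Num.min (U1 i j) 0 / 2) ->
  (forall (i : 'I_N) (j : 'I_M), (i : nat) == 0%N -> sL' i j <= - (Num.max (U1 i j) 0 / 2)) ->
  (forall (i : 'I_N) (j : 'I_M), (j : nat) == M.-1 -> sU' i j <= Num.min (U2 i j) 0 / 2) ->
  (forall (i : 'I_N) (j : 'I_M), (j : nat) == 0%N -> sD' i j <= - (Num.max (U2 i j) 0 / 2)) ->
  sR'' <= - (1 / (2 * p * gstep N)) -> sL'' <= - (1 / (2 * p * gstep N)) ->
  sU'' <= - (1 / (2 * p * gstep M)) -> sD'' <= - (1 / (2 * p * gstep M)) ->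
  (forall (V : 'M[R]_(N, M)) j, normP Px (Dx *m hmul (col j U1) (col j V)
       - hmul (col j U1) (Dx *m col j V)) <= K1 * normP Px (col j V)) ->
  (forall (V : 'M[R]_(N, M)) i, normP Py (Dy *m hmul (col i U2^T) (col i V^T)
       - hmul (col i U2^T) (Dy *m col i V^T)) <= K2 * normP Py (col i V^T)) ->
  ipw (wt px) (wt py) V1 (rhs1 eps Dx Dy U1 U2 B V1 V2)
  + ipw (wt px) (wt py) V2 (rhs2 eps Dx Dy U1 U2 B V1 V2)
  <= ((K1 + K2) / 2 + 2 * Num.max (Num.max (mxmaxabs (dX Dx U1)) (mxmaxabs (dY Dy U1)))
                          (Num.max (mxmaxabs (dX Dx U2)) (mxmaxabs (dY Dy U2))))
     * (ipw (wt px) (wt py) V1 V1 + ipw (wt px) (wt py) V2 V2).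
Proof.
move=> Px Py Dx Dy SL SR SD SU B hN hM he hQx hQy hpx hpy hR hL hU hD hR2 hL2 hU2 hD2 HX HY.
have hpx0 := hQx.1; have hpy0 := hQy.1.
have hp : 0 < p.
  have i0 : (0 < N)%N by apply: ltnW.
  by rewrite -(hpx (Ordinal i0)) //= eqxx.
have wx0 : forall i, 0 <= wt px i by move=> i; apply/ltW/wt_gt0.
have wy0 : forall j, 0 <= wt py j by move=> j; apply/ltW/wt_gt0.
set mm := Num.max _ _.
rewrite /rhs1 /rhs2 !ipw_rhs.
have cx1 : - ipw (wt px) (wt py) V1 (hmul U1 (dX Dx V1)) <=
   (K1 * ipw (wt px) (wt py) V1 V1 - s2 (fun i j => wt py j * bd i * U1 i j * V1 i j ^+ 2)) / 2
   := conv_x hN hQx wy0 (HX V1).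
have cx2 : - ipw (wt px) (wt py) V2 (hmul U1 (dX Dx V2)) <=
   (K1 * ipw (wt px) (wt py) V2 V2 - s2 (fun i j => wt py j * bd i * U1 i j * V2 i j ^+ 2)) / 2
   := conv_x hN hQx wy0 (HX V2).
have cy1 : - ipw (wt px) (wt py) V1 (hmul U2 (dY Dy V1)) <=
   (K2 * ipw (wt px) (wt py) V1 V1 - s2 (fun i j => wt px i * bd j * U2 i j * V1 i j ^+ 2)) / 2
   := conv_y hM hQy wx0 (HY V1).
have cy2 : - ipw (wt px) (wt py) V2 (hmul U2 (dY Dy V2)) <=
   (K2 * ipw (wt px) (wt py) V2 V2 - s2 (fun i j => wt px i * bd j * U2 i j * V2 i j ^+ 2)) / 2
   := conv_y hM hQy wx0 (HY V2).
have mA : forall (A : 'M[R]_(N, M)) i j, mxmaxabs A <= mm -> `|A i j| <= mm.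
  by move=> A i j h; apply: le_trans (mxmaxabs_ge _ _ _) h.
have ct := @cterm_sum N M (wt px) (wt py) (dY Dy U2) (dY Dy U1) (dX Dx U2) (dX Dx U1) V1 V2 mm
  wx0 wy0 (fun i j => mA _ i j (le_trans (maxR _ _) (maxR _ _)))
  (fun i j => mA _ i j (le_trans (maxR _ _) (maxL _ _)))
  (fun i j => mA _ i j (le_trans (maxL _ _) (maxR _ _)))
  (fun i j => mA _ i j (le_trans (maxL _ _) (maxL _ _))).
set w := dX Dx V2 - dY Dy V1.
have vs : ipw (wt px) (wt py) V1 (- dY Dy (dY Dy V1) + dX Dx (dY Dy V2))
  + ipw (wt px) (wt py) V2 (dX Dx (dY Dy V1) - dX Dx (dX Dx V2))
  = s2 (fun i j => wt px i * wt py j * w i j * w i j)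
    + s2 (fun i j => wt px i * bd j * V1 i j * w i j)
    - s2 (fun i j => wt py j * bd i * V2 i j * w i j)
  := visc_id V1 V2 hN hM hQx hQy.
have vs' : eps * ipw (wt px) (wt py) V1 (- dY Dy (dY Dy V1) + dX Dx (dY Dy V2))
  + eps * ipw (wt px) (wt py) V2 (dX Dx (dY Dy V1) - dX Dx (dX Dx V2))
  = eps * (s2 (fun i j => wt px i * wt py j * w i j * w i j)
    + s2 (fun i j => wt px i * bd j * V1 i j * w i j)
    - s2 (fun i j => wt py j * bd i * V2 i j * w i j)) by rewrite -mulrDr vs.
have p1 : ipw (wt px) (wt py) V1 (B V1)
   = s2 (fun i j => pcoef px py SL SR SD SU i j * V1 i j ^+ 2)
   := pen_id SL SR SD SU V1 hN hM hpx0 hpy0.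
have p2 : ipw (wt px) (wt py) V2 (B V2)
   = s2 (fun i j => pcoef px py SL SR SD SU i j * V2 i j ^+ 2)
   := pen_id SL SR SD SU V2 hN hM hpx0 hpy0.
have hSL : forall i j, SL i j = sL' i j + eps * (if (i : nat) == 0%N then sL'' else 0).
  by move=> i j; rewrite /SL !mxE.
have hSR : forall i j, SR i j = sR' i j + eps * (if (i : nat) == N.-1 then sR'' else 0).
  by move=> i j; rewrite /SR !mxE.
have hSD : forall i j, SD i j = sD' i j + eps * (if (j : nat) == 0%N then sD'' else 0).
  by move=> i j; rewrite /SD !mxE.
have hSU : forall i j, SU i j = sU' i j + eps * (if (j : nat) == M.-1 then sU'' else 0).
  by move=> i j; rewrite /SU !mxE.
have bb := @bnd N M px py p U1 U2 V1 V2 w SL SR SD SU sL' sR' sD' sU' sL'' sR'' sD'' sU'' eps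
  hN hM he hp hpx0 hpy0 hpx hpy hR hL hU hD hR2 hL2 hU2 hD2 hSL hSR hSD hSU.
rewrite p1 p2.
move: cx1 cx2 cy1 cy2 ct vs' bb.
set a1 := ipw _ _ V1 V1; set a2 := ipw _ _ V2 V2.
lra.
Qed.

End S.
Section T.
Variable R : realType.
Lemma cont_bound (g : R -> R -> R) : continuous (fun q : R * R => g q.1 q.2) ->
  exists K, 0 <= K /\ forall x y, 0 <= x <= 1 -> 0 <= y <= 1 -> `|g x y| <= K.
Proof.
move=> hg.
set A := `[(0:R), 1] `*` `[(0:R), 1].
have cA : compact A by apply: compact_setX; apply: segment_compact.
have A0 : A !=set0 by exists (0, 0); split => /=; rewrite in_itv /= lexx ler01.
have cf : {within A, continuous (fun q : R * R => `|g q.1 q.2|)}.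
  apply: continuous_subspaceT => q.
  exact: (continuous_comp (hg q) (@norm_continuous _ R^o _)).
have [c cA' hc] := compact_EVT_max A0 cA cf.
exists `|g c.1 c.2|; split => // x y hx hy.
apply: (hc (x, y)); rewrite inE; split => /=; rewrite in_itv /=; by [].
Qed.
End T.
Section T2.
Variable R : realType.
Lemma supnorm_le (f : R -> R) K : (forall x, 0 <= x <= 1 -> `|f x| <= K) ->
  0 <= supnorm01 f <= K.
Proof.
move=> hK.
set E := [set `|f x| | x in `[(0:R), 1]].
have E0 : E `|f 0| by exists 0 => //; rewrite /= in_itv /= lexx ler01.
have ub : ubound E K by move=> _ [x hx <-]; apply: hK; move: hx; rewrite /= in_itv.
apply/andP; split.
  apply: le_trans (normr_ge0 (f 0)) _.
  by apply: ub_le_sup => //; exists K.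
by apply: ge_sup => //; exists `|f 0|.
Qed.
End T2.
Section T3.
Variable R : realType.
Lemma slice_x (f : R -> R -> R) y : smooth2 f -> smooth1 (fun x => f x y).
Proof.
move=> hf k x.
have -> : derive1n k (fun x => f x y) = (fun x => pds (nseq k true) f x y).
  elim: k => [//|k IH]; by rewrite derive1nS IH.
exact: ((hf (nseq k true)).1 x y).1.
Qed.
Lemma slice_y (f : R -> R -> R) x : smooth2 f -> smooth1 (fun y => f x y).
Proof.
move=> hf k y.
have -> : derive1n k (fun y => f x y) = (fun y => pds (nseq k false) f x y).
  elim: k => [//|k IH]; by rewrite derive1nS IH.
exact: ((hf (nseq k false)).1 x y).2.
Qed.
Lemma gpt_01 n (i : 'I_n) : 0 <= (gpt i : R) <= 1.
Proof.
rewrite /gpt /gstep mul1r; apply/andP; split.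
  by rewrite mulr_ge0 // invr_ge0.
case: n i => [[]//|n] i /=.
case: n i => [|n] i; first by rewrite (ord1 i) mul0r ler01.
rewrite ler_pdivrMr ?ltr0n // mul1r ler_nat.
by rewrite -ltnS ltn_ord.
Qed.
Lemma gpt_last n (i : 'I_n) : (2 <= n)%N -> (i : nat) == n.-1 -> gpt i = 1 :> R.
Proof.
move=> hn /eqP hi; rewrite /gpt hi /gstep mul1r divff // pnatr_eq0.
by rewrite -lt0n -ltnS (ltn_predK hn).
Qed.
Lemma gpt_first n (i : 'I_n) : (i : nat) == 0%N -> gpt i = 0 :> R.
Proof. by move=> /eqP hi; rewrite /gpt hi mul0r. Qed.
End T3.
Section G.
Variable R : realType.
Lemma isd_lin (c x : R) : is_derive x 1 (fun s : R => c * s) c.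
Proof.
have := @is_deriveZ R R^o R^o id c x 1 1 (is_derive_id _ _).
by rewrite /GRing.scale /= mulr1.
Qed.
Lemma isd_exp (c x : R) : is_derive x 1 (fun s : R => expR (c * s)) (expR (c * x) * c).
Proof.
have := @is_derive1_comp R expR (fun s => c * s) x (expR (c * x)) c _ (isd_lin c x).
by apply.
Qed.

Lemma gronwall (E dE : R -> R) (c : R) :
  {within `[0, +oo[, continuous E} ->
  (forall t : R, 0 < t -> is_derive t 1 E (dE t)) ->
  (forall t : R, 0 < t -> dE t <= c * E t) ->
  forall t : R, 0 <= t -> E t <= expR (c * t) * E 0.
Proof.
move=> cE dEt hle t t0.
case: (eqVneq t 0) => [->|tn0]; first by rewrite mulr0 expR0 mul1r.
have tp : 0 < t by rewrite lt_neqAle eq_sym tn0 t0.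
set g := fun s : R => expR (- c * s) * E s.
have dg : forall s : R, 0 < s -> is_derive s 1 g (expR (- c * s) * dE s + E s * (expR (- c * s) * - c)).
  move=> s s0; have h1 := isd_exp (- c) s; have h2 := dEt s s0.
  exact: (@is_deriveM R R^o _ _ s 1 _ _ h1 h2).
have key : g t <= g 0.
  apply: (@ler0_derive1_nincr R g 0 t) => //.
  - move=> s; rewrite in_itv /= => /andP[s0 _]; exact: (dg s s0).(ex_derive).
  - move=> s; rewrite in_itv /= => /andP[s0 _].
    rewrite derive1E (dg s s0).(derive_val).
    have := hle s s0; have := expR_gt0 (- c * s) => e0 h.
    have : expR (- c * s) * dE s <= expR (- c * s) * (c * E s) by rewrite ler_wpM2l // ltW.
    nra.
  - have sub : `[0, t] `<=` `[0, +oo[.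
      by move=> s; rewrite /= !in_itv /= => /andP[-> _].
    have cEt := continuous_subspaceW sub cE.
    have cex : {within `[0, t], continuous (fun s : R => expR (- c * s))}.
      apply: continuous_subspaceT => y.
      apply: differentiable_continuous; apply/derivable1_diffP.
      exact: (isd_exp (- c) y).(ex_derive).
    move=> x.
    have H := @continuousM R (subspace `[0, t]) _ _ x (cex x) (cEt x).
    exact: H.
have e0 : g 0 = E 0 by rewrite /g mulr0 expR0 mul1r.
rewrite e0 /g in key.
have hpos := expR_gt0 (c * t).
have : expR (c * t) * (expR (- c * t) * E t) <= expR (c * t) * E 0.
  by rewrite ler_wpM2l // ltW.
by rewrite mulrA -expRD mulNr addrN expR0 mul1r.
Qed.
Lemma isd_sum n (F : 'I_n -> R -> R) dF (t : R) :
  (forall i, is_derive t 1 (F i) (dF i)) ->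
  is_derive t 1 (fun s => \sum_i F i s) (\sum_i dF i).
Proof.
move=> H; have := @is_derive_sum R R^o R^o n F t 1 dF H.
by rewrite fct_sumE.
Qed.

Lemma isd_sq (w : R) (v : R -> R) (t dv : R) : is_derive t 1 v dv ->
  is_derive t 1 (fun s => w * v s * v s) (2 * w * v t * dv).
Proof.
move=> H.
have H2 := @is_deriveM R R^o v v t 1 dv dv H H.
have H3 := @is_deriveZ R R^o R^o (v * v) w t 1 _ H2.
have -> : (fun s => w * v s * v s) = w *: (v * v).
  by apply/funext => s; rewrite /= -mulrA.
have -> : 2 * w * v t * dv = w *: (v t *: dv + v t *: dv).
  rewrite /GRing.scale /=; ring.
exact: H3.
Qed.
Lemma isd_ipw n m (wx : 'I_n -> R) (wy : 'I_m -> R) (V : R -> 'M[R]_(n, m)) (t : R)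
  (dV : 'M[R]_(n, m)) :
  (forall i j, is_derive t 1 (fun s => V s i j) (dV i j)) ->
  is_derive t 1 (fun s => \sum_i \sum_j wx i * wy j * V s i j * V s i j)
    (2 * \sum_i \sum_j wx i * wy j * V t i j * dV i j).
Proof.
move=> H.
have -> : 2 * \sum_i \sum_j wx i * wy j * V t i j * dV i j
   = \sum_i \sum_j 2 * (wx i * wy j) * V t i j * dV i j.
  rewrite mulr_sumr; apply: eq_bigr => i _; rewrite mulr_sumr.
  by apply: eq_bigr => j _; ring.
apply: (@isd_sum n (fun i s => \sum_j wx i * wy j * V s i j * V s i j)) => i.
apply: (@isd_sum m (fun j s => wx i * wy j * V s i j * V s i j)) => j.
exact: (@isd_sq (wx i * wy j) (fun s => V s i j) t _ (H i j)).
Qed.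
Lemma cont_sum (T : topologicalType) n (F : 'I_n -> T -> R) x :
  (forall i, {for x, continuous (F i)}) -> {for x, continuous (fun s => \sum_i F i s)}.
Proof.
move=> H.
have -> : (fun s => \sum_i F i s) = \sum_i F i by rewrite fct_sumE.
elim/big_ind: _ => //.
- exact: cst_continuous.
- by move=> f g hf hg; apply: continuousD.
Qed.

Lemma cont_ipw (A : set R) n m (wx : 'I_n -> R) (wy : 'I_m -> R) (V : R -> 'M[R]_(n, m)) :
  (forall i j, {within A, continuous (fun s => V s i j)}) ->
  {within A, continuous (fun s => \sum_i \sum_j wx i * wy j * V s i j * V s i j)}.
Proof.
move=> H x.
apply: (@cont_sum (subspace A) n (fun i s => \sum_j wx i * wy j * V s i j * V s i j)) => i.
apply: (@cont_sum (subspace A) m (fun j s => wx i * wy j * V s i j * V s i j)) => j.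
apply: (@continuousM R (subspace A) (fun s => wx i * wy j * V s i j) (fun s => V s i j) x); last exact: H.
apply: (@continuousM R (subspace A) (fun s => wx i * wy j) (fun s => V s i j) x); last exact: H.
exact: cst_continuous.
Qed.
End G.
Lemma cont_add (R : realType) (A : set R) (f g : R -> R) :
  {within A, continuous f} -> {within A, continuous g} ->
  {within A, continuous (fun s => f s + g s)}.
Proof.
move=> hf hg x.
exact: (@continuousD R R^o (subspace A) _ _ x (hf x) (hg x)).
Qed.

Unset Implicit Arguments. Set Strict Implicit.

Theorem theorem3p4 (R : realType) (eps : R) (u1 u2 : R -> R -> R) (C0 : R) :
  0 < eps -> smooth2 u1 -> smooth2 u2 ->
  exists c : R -> R,
  forall (N M : nat) (px : 'I_N -> R) (Qx : 'M[R]_N) (py : 'I_M -> R) (Qy : 'M[R]_M)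
    (p : R) (sL' sR' sD' sU' : 'M[R]_(N, M)) (sL'' sR'' sD'' sU'' : R)
    (V1 V2 : R -> 'M[R]_(N, M)),
  let Px := Pmat px in let Py := Pmat py in
  let Dx := Dmat px Qx in let Dy := Dmat py Qy in
  let U1 := grid2 N M u1 in let U2 := grid2 N M u2 in
  let SL := sL' + eps *: rowpen N M 0 sL'' in
  let SR := sR' + eps *: rowpen N M N.-1 sR'' in
  let SD := sD' + eps *: colpen N M 0 sD'' in
  let SU := sU' + eps *: colpen N M M.-1 sU'' in
  let B := Bop Px Py SL SR SD SU in
  (2 <= N)%N -> (2 <= M)%N ->
  SBP px Qx -> SBP py Qy ->
  (forall i : 'I_N, ((i : nat) == 0%N) || ((i : nat) == N.-1) -> px i = p) ->
  (forall j : 'I_M, ((j : nat) == 0%N) || ((j : nat) == M.-1) -> py j = p) ->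
  commutator_bound C0 Px Dx -> commutator_bound C0 Py Dy ->
  (* convective penalty parameters *)
  (forall (i : 'I_N) (j : 'I_M),
     if (i : nat) == N.-1 then sR' i j <= Num.min (u1 1 (gpt j)) 0 / 2
     else sR' i j == 0) ->
  (forall (i : 'I_N) (j : 'I_M),
     if (i : nat) == 0%N then sL' i j <= - (Num.max (u1 0 (gpt j)) 0 / 2)
     else sL' i j == 0) ->
  (forall (i : 'I_N) (j : 'I_M),
     if (j : nat) == M.-1 then sU' i j <= Num.min (u2 (gpt i) 1) 0 / 2
     else sU' i j == 0) ->
  (forall (i : 'I_N) (j : 'I_M),
     if (j : nat) == 0%N then sD' i j <= - (Num.max (u2 (gpt i) 0) 0 / 2)
     else sD' i j == 0) ->
  (* viscous penalty parameters *)
  sR'' <= - (1 / (2 * p * gstep N)) ->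
  sL'' <= - (1 / (2 * p * gstep N)) ->
  sU'' <= - (1 / (2 * p * gstep M)) ->
  sD'' <= - (1 / (2 * p * gstep M)) ->
  (* V solves the semi-discrete scheme for t > 0, continuous on [0, oo) *)
  (forall (i : 'I_N) (j : 'I_M),
     {within `[0%R, +oo[, continuous (fun s => V1 s i j)} /\
     {within `[0%R, +oo[, continuous (fun s => V2 s i j)}) ->
  (forall t : R, 0 < t -> forall (i : 'I_N) (j : 'I_M),
     derivable (fun s => V1 s i j) t 1 /\
     derivable (fun s => V2 s i j) t 1 /\
     derive1 (fun s => V1 s i j) t = rhs1 eps Dx Dy U1 U2 B (V1 t) (V2 t) i j /\
     derive1 (fun s => V2 s i j) t = rhs2 eps Dx Dy U1 U2 B (V1 t) (V2 t) i j) ->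
  forall t : R, 0 <= t ->
    energy Px Py (V1 t) (V2 t)
      <= expR (c (Num.max (Num.max (mxmaxabs (dX Dx U1)) (mxmaxabs (dY Dy U1)))
                          (Num.max (mxmaxabs (dX Dx U2)) (mxmaxabs (dY Dy U2)))) * t)
         * energy Px Py (V1 0) (V2 0).
Proof.
move=> he hu1 hu2.
have [Kx [Kx0 hKx]] := @cont_bound R (pds [:: true] u1) (hu1 [:: true]).2.
have [Ky [Ky0 hKy]] := @cont_bound R (pds [:: false] u2) (hu2 [:: false]).2.
exists (fun mm => `|C0| * (Kx + Ky) + 4 * mm).
move=> N M px Qx py Qy p sL' sR' sD' sU' sL'' sR'' sD'' sU'' V1 V2 Px Py Dx Dy U1 U2
  SL SR SD SU B hN hM hQx hQy hpx hpy hcx hcy hR hL hU hD hR2 hL2 hU2 hD2 hcont hder.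
set mm := Num.max _ _.
have HX : forall (V : 'M[R]_(N, M)) j, normP Px (Dx *m hmul (col j U1) (col j V)
       - hmul (col j U1) (Dx *m col j V)) <= (`|C0| * Kx) * normP Px (col j V).
  move=> V j.
  have eg : grid1 N (fun x => u1 x (gpt j)) = col j U1.
    by apply/matrixP => i k; rewrite !mxE.
  have := hcx (fun x => u1 x (gpt j)) (col j V) (@slice_x R u1 (gpt j) hu1).
  rewrite eg => h; apply: (le_trans h).
  have /andP[s0 s1] := @supnorm_le R (derive1 (fun x => u1 x (gpt j))) Kx
     (fun x hx => hKx x (gpt j) hx (@gpt_01 R _ j)).
  apply: ler_wpM2r; first exact: sqrtr_ge0.
  apply: (le_trans (ler_wpM2r s0 (ler_norm C0))).
  exact: ler_wpM2l.
have HY : forall (V : 'M[R]_(N, M)) i, normP Py (Dy *m hmul (col i U2^T) (col i V^T)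
       - hmul (col i U2^T) (Dy *m col i V^T)) <= (`|C0| * Ky) * normP Py (col i V^T).
  move=> V i.
  have eg : grid1 M (fun y => u2 (gpt i) y) = col i U2^T.
    by apply/matrixP => j k; rewrite !mxE.
  have := hcy (fun y => u2 (gpt i) y) (col i V^T) (@slice_y R u2 (gpt i) hu2).
  rewrite eg => h; apply: (le_trans h).
  have /andP[s0 s1] := @supnorm_le R (derive1 (fun y => u2 (gpt i) y)) Ky
     (fun y hy => hKy (gpt i) y (@gpt_01 R _ i) hy).
  apply: ler_wpM2r; first exact: sqrtr_ge0.
  apply: (le_trans (ler_wpM2r s0 (ler_norm C0))).
  exact: ler_wpM2l.
have hR' : forall (i : 'I_N) (j : 'I_M), (i : nat) == N.-1 -> sR' i j <= Num.min (U1 i j) 0 / 2.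
  move=> i j hi; have := hR i j; rewrite hi /= /U1 mxE (@gpt_last R _ _ hN hi) //.
have hL' : forall (i : 'I_N) (j : 'I_M), (i : nat) == 0%N -> sL' i j <= - (Num.max (U1 i j) 0 / 2).
  move=> i j hi; have := hL i j; rewrite hi /= /U1 mxE (@gpt_first R _ _ hi) //.
have hU' : forall (i : 'I_N) (j : 'I_M), (j : nat) == M.-1 -> sU' i j <= Num.min (U2 i j) 0 / 2.
  move=> i j hj; have := hU i j; rewrite hj /= /U2 mxE (@gpt_last R _ _ hM hj) //.
have hD' : forall (i : 'I_N) (j : 'I_M), (j : nat) == 0%N -> sD' i j <= - (Num.max (U2 i j) 0 / 2).
  move=> i j hj; have := hD i j; rewrite hj /= /U2 mxE (@gpt_first R _ _ hj) //.
have eE : (fun s => energy Px Py (V1 s) (V2 s)) = (fun s =>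
   \sum_i \sum_j wt px i * wt py j * V1 s i j * V1 s i j
   + \sum_i \sum_j wt px i * wt py j * V2 s i j * V2 s i j).
  by apply/funext => s; rewrite /energy !ipP_ipw.
set dV1 := fun t : R => \matrix_(i, j) derive1 (fun s => V1 s i j) t.
set dV2 := fun t : R => \matrix_(i, j) derive1 (fun s => V2 s i j) t.
apply: (@gronwall R (fun s => energy Px Py (V1 s) (V2 s))
  (fun t => 2 * \sum_i \sum_j wt px i * wt py j * V1 t i j * dV1 t i j
          + 2 * \sum_i \sum_j wt px i * wt py j * V2 t i j * dV2 t i j)); last first.
- move=> t t0.
  have e1 : dV1 t = rhs1 eps Dx Dy U1 U2 B (V1 t) (V2 t).
    by apply/matrixP => i j; rewrite mxE; case: (hder t t0 i j) => _ [_ [-> _]].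
  have e2 : dV2 t = rhs2 eps Dx Dy U1 U2 B (V1 t) (V2 t).
    by apply/matrixP => i j; rewrite mxE; case: (hder t t0 i j) => _ [_ [_ ->]].
  have hb : ipw (wt px) (wt py) (V1 t) (rhs1 eps Dx Dy U1 U2 B (V1 t) (V2 t))
     + ipw (wt px) (wt py) (V2 t) (rhs2 eps Dx Dy U1 U2 B (V1 t) (V2 t))
     <= ((`|C0| * Kx + `|C0| * Ky) / 2 + 2 * mm)
        * (ipw (wt px) (wt py) (V1 t) (V1 t) + ipw (wt px) (wt py) (V2 t) (V2 t))
    := @dE_bound R N M px Qx py Qy p sL' sR' sD' sU' sL'' sR'' sD'' sU'' U1 U2 (V1 t) (V2 t)
         eps (`|C0| * Kx) (`|C0| * Ky) hN hM he hQx hQy hpx hpy hR' hL' hU' hD'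
         hR2 hL2 hU2 hD2 HX HY.
  rewrite /energy !ipP_ipw.
  have -> : \sum_i \sum_j wt px i * wt py j * V1 t i j * dV1 t i j
     = ipw (wt px) (wt py) (V1 t) (rhs1 eps Dx Dy U1 U2 B (V1 t) (V2 t)) by rewrite -e1.
  have -> : \sum_i \sum_j wt px i * wt py j * V2 t i j * dV2 t i j
     = ipw (wt px) (wt py) (V2 t) (rhs2 eps Dx Dy U1 U2 B (V1 t) (V2 t)) by rewrite -e2.
  move: hb; set A1 := ipw _ _ (V1 t) (rhs1 _ _ _ _ _ _ _ _).
  set A2 := ipw _ _ (V2 t) (rhs2 _ _ _ _ _ _ _ _).
  set E1 := ipw _ _ (V1 t) (V1 t); set E2 := ipw _ _ (V2 t) (V2 t).
  lra.
- move=> t t0; rewrite eE.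
  apply: is_deriveD.
  + apply: isd_ipw => i j; rewrite /dV1 mxE derive1E.
    by apply: derivableP; case: (hder t t0 i j).
  + apply: isd_ipw => i j; rewrite /dV2 mxE derive1E.
    by apply: derivableP; case: (hder t t0 i j) => _ [].
- rewrite eE; apply: cont_add.
  + by apply: cont_ipw => i j; case: (hcont i j).
  + by apply: cont_ipw => i j; case: (hcont i j).
Qed.
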